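(* Consider the decentralized secure pliable index coding problem with $m$ users, $m$ messages and $s$-circular-shift side information sets, as defined in the context, and restrict all encoding functions to be linear. In each of the following cases there is no (linear) scheme that satisfies all users while meeting the individual security constraint: (1) $s=1$ and $m\geq 3$; (2) $s=2$ and $m\geq 5$; (3) $s=3$ and $m$ odd; (4) $s=m-2$ and $m$ odd.
   Context: Decentralized secure PICOD with circular shift side information. Fix integers $m\ge 2$ and $s\in[m-1]$ (where $[a]=\{1,\dots,a\}$). There are $m$ users $u_1,\dots,u_m$, no central transmitter, and $m$ independent messages $w_1,\dots,w_m$, each consisting of $\kappa\in\mathbb{N}$ independent uniformly distributed bits (for linear schemes, symbols of a finite field). User $u_i$ knows the messages $W_{A_i}=\{w_a: a\in A_i\}$ with $A_i=\{i,i+1,\dots,i+s-1\}$, indices taken modulo $m$ (in $[m]$); the collection of all $A_i$ is known to everyone. Users communicate over a shared noiseless broadcast channel, one at a time: user $u_j$ sends a codeword $x_j=\mathsf{ENC}_j(W_{A_j})$ of length $\ell_j\kappa$, and the total code-length is $\ell=\sum_j \ell_j$; let $x$ denote all transmitted codewords. Each user $u_j$ decodes $\widehat w_j=\mathsf{DEC}_j(W_{A_j},x)$; user $u_j$ is satisfied if $\widehat w_j=w_{d_j}$ for some $d_j\in[m]\setminus A_j$ (any message outside its side information). Individual security requires that for every user $u_j$, $I(W_i; x\mid W_{A_j})=0$ for all $i\in[m]\setminus(\{d_j\}\cup A_j)$, i.e., user $u_j$ obtains no information about any message outside its side information other than its decoded one. A scheme is feasible if all users are satisfied and the security constraint holds;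 $\kappa$ may be taken arbitrarily large. Linear encoding means each $\mathsf{ENC}_j$ is a linear map. *)

(* Defs.v *)
From HB Require Import structures.
From mathcomp Require Import all_boot all_order all_algebra all_field.
Set Implicit Arguments. Unset Strict Implicit. Unset Printing Implicit Defensive.
Import GRing.Theory.
Local Open Scope ring_scope.

(* Users and messages are indexed by 'I_m (0-based).  The side information of
   user i is the circular window A_i = {i, i+1, ..., i+s-1} (mod m). *)
Definition side (m s : nat) (i : 'I_m) : {set 'I_m} :=
  [set j : 'I_m | ((j + m - i) %% m < s)%N].

(* The message matrix W : 'M[F]_(m, k): row a is message w_a (k symbols of F).
   proj A W keeps exactly the messages indexed by A (i.e. W_A) and zeroes the rest. *)
Definition proj (F : fieldType) (m k : nat) (A : {set 'I_m}) (W : 'M[F]_(m, k))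
  : 'M[F]_(m, k) := \matrix_(i, c) (if i \in A then W i c else 0).

(* Linear decentralized scheme: user j sends x_j = vec(W_{A_j}) * E_j, a codeword
   of length n j (an arbitrary length, covering l_j * kappa). *)
Definition codeword (F : fieldType) (m k : nat) (n : 'I_m -> nat)
  (E : forall j : 'I_m, 'M[F]_(m * k, n j)) (A : 'I_m -> {set 'I_m})
  (W : 'M[F]_(m, k)) : forall j : 'I_m, 'rV[F]_(n j) :=
  fun j => mxvec (proj (A j) W) *m E j.

Definition cw_eq (F : fieldType) (m : nat) (n : 'I_m -> nat)
  (x y : forall j : 'I_m, 'rV[F]_(n j)) : bool := [forall j, x j == y j].

(* Security I(W_i ; x | W_{A_j}) = 0 is written out as conditional
   independence under the uniform distribution:
   for all values a of W_{A_j} (given by W0), v of w_i and y of x,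
     P(W_i = v, x = y | W_A = a) = P(W_i = v | W_A = a) * P(x = y | W_A = a),
   with P(W_i = v | W_A = a) = 1 / #|F^k|, cleared of denominators. *)
Definition feasible_linear (F : finFieldType) (m s k : nat) : Prop :=
  exists (n : 'I_m -> nat) (E : forall j : 'I_m, 'M[F]_(m * k, n j))
         (d : 'I_m -> 'I_m)
         (DEC : 'I_m -> 'M[F]_(m, k) -> (forall j : 'I_m, 'rV[F]_(n j)) -> 'rV[F]_k),
    let x := codeword E (side s) in
    (forall j, d j \notin side s j) /\
    (forall j (W : 'M[F]_(m, k)), DEC j (proj (side s j) W) (x W) = row (d j) W) /\
    (forall (j i : 'I_m), i \notin side s j -> i != d j ->
       forall (W0 : 'M[F]_(m, k)) (v : 'rV[F]_k) (y : forall j : 'I_m, 'rV[F]_(n j)),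
         (#|[set W : 'M[F]_(m, k) | (proj (side s j) W == proj (side s j) W0)
                                    && (row i W == v) && cw_eq (x W) y]|
            * #|{: 'rV[F]_k}|)%N
         = #|[set W : 'M[F]_(m, k) | (proj (side s j) W == proj (side s j) W0)
                                    && cw_eq (x W) y]|).

(* Main.v *)
Require Import Defs.
From HB Require Import structures.
From mathcomp Require Import all_boot all_order all_algebra all_field.
From mathcomp Require Import zify.
From Stdlib Require Import FunctionalExtensionality.
Set Implicit Arguments. Unset Strict Implicit. Unset Printing Implicit Defensive.
Import GRing.Theory.

Section Cyc.
Variable m' : nat.
Local Notation m := m'.+1.

Definition sh (j : 'I_m) (t : nat) : 'I_m := Ordinal (ltn_pmod (j + t) (ltn0Sn m')).
Definition off (j i : 'I_m) : nat := (i + m - j) %% m.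

Lemma off_lt j i : off j i < m.
Proof. exact: ltn_pmod. Qed.

Lemma shD j a b : sh (sh j a) b = sh j (a + b).
Proof. apply: val_inj => /=. by rewrite modnDml addnA. Qed.

Lemma sh_mod j t : sh j (t %% m) = sh j t.
Proof. apply: val_inj => /=. by rewrite modnDmr. Qed.

Lemma sh0 j : sh j 0 = j.
Proof. apply: val_inj => /=. by rewrite addn0 modn_small. Qed.

Lemma shm j : sh j m = j.
Proof. by rewrite -sh_mod modnn sh0. Qed.

Lemma off_sh j t : off j (sh j t) = t %% m.
Proof.
rewrite /off /=.
have hj : (j <= m)%N by apply: ltnW.
rewrite -addnBA // modnDml.
have -> : j + t + (m - j) = t + m by lia.
by rewrite modnDr.
Qed.

Lemma sh_off j i : sh j (off j i) = i.
Proof.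
apply: val_inj => /=; rewrite /off modnDmr.
have hj : (j <= m)%N by apply: ltnW.
by rewrite addnBA ?(leq_trans hj) ?leq_addl // addKn modnDr modn_small.
Qed.

Lemma sh_inj j a b : a < m -> b < m -> sh j a = sh j b -> a = b.
Proof. move=> ha hb /(f_equal (off j)). by rewrite !off_sh !modn_small. Qed.

Lemma in_side s u a : (a \in side s u) = (off u a < s).
Proof. by rewrite inE. Qed.

Lemma off_shsh j a b : a < m -> b < m ->
  off (sh j b) (sh j a) = if b <= a then a - b else a + m - b.
Proof.
move=> ha hb.
have -> : sh j a = sh (sh j b) (a + m - b).
  rewrite shD; apply: val_inj => /=.
  have -> : b + (a + m - b) = a + m by lia.
  by rewrite addnA modnDr.
rewrite off_sh. case: leqP => h.
  have -> : a + m - b = (a - b) + m by lia.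
  by rewrite modnDr modn_small //; lia.
by rewrite modn_small //; lia.
Qed.

Lemma off_self j : off j j = 0.
Proof. by rewrite -{2}(sh0 j) off_sh mod0n. Qed.

Lemma off0 j i : off j i = 0 -> i = j.
Proof. by move=> h; rewrite -(sh_off j i) h sh0. Qed.

End Cyc.


Section Core.
Variables (F : fieldType) (m' k s : nat).
Local Notation m := m'.+1.
Local Notation MX := 'M[F]_(m, k).
Local Open Scope ring_scope.

Variable P : 'I_m -> MX -> Prop.
Hypothesis P0 : forall e, P e 0.
Hypothesis PD : forall e W W', P e W -> P e W' -> P e (W + W').
Hypothesis PN : forall e W, P e W -> P e (- W).
Hypothesis Ploc : forall e W W', proj (side s e) W = proj (side s e) W' -> P e W -> P e W'.
Variable d : 'I_m -> 'I_m.
Hypothesis Hd : forall j, d j \notin side s j.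
Definition Zs (W : MX) := forall e, P e W.
Hypothesis Dec : forall j W, Zs W -> proj (side s j) W = 0 -> row (d j) W = 0.
Hypothesis Sec : forall j i v, i \notin side s j -> i != d j ->
  exists W, Zs W /\ proj (side s j) W = 0 /\ row i W = v.
Variable v0 : 'rV[F]_k.
Hypothesis Hv0 : v0 != 0.
Hypothesis Hs0 : (0 < s)%N.
Hypothesis Hsm : (s < m)%N.

Lemma proj_row (B : {set 'I_m}) (W : MX) (a : 'I_m) : row a (proj B W) = if a \in B then row a W else 0.
Proof. apply/rowP => c; rewrite !mxE; by case: ifP => _; rewrite ?mxE. Qed.

Lemma proj_eq (B : {set 'I_m}) (W W' : MX) : (forall a, a \in B -> row a W = row a W') -> proj B W = proj B W'.
Proof.
move=> h; apply/matrixP => a c; rewrite !mxE; case: ifP => // /h /rowP /(_ c).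
by rewrite !mxE.
Qed.

Lemma proj0 (B : {set 'I_m}) (W : MX) : (forall a, a \in B -> row a W = 0) -> proj B W = 0.
Proof.
move=> h; apply/matrixP => a c; rewrite !mxE; case: ifP => // /h /rowP /(_ c).
by rewrite !mxE.
Qed.

Lemma proj0_row (B : {set 'I_m}) (W : MX) (a : 'I_m) : proj B W = 0 -> a \in B -> row a W = 0.
Proof. by move=> h ha; have := proj_row B W a; rewrite ha h row0 => /esym. Qed.

Definition single (i : 'I_m) (v : 'rV[F]_k) : MX :=
  \matrix_(a, c) (if a == i then v 0 c else 0).

Definition free e (a : 'I_m) := forall v, P e (single a v).
Definition dead (p : 'I_m) := forall W, Zs W -> row p W = 0.

Lemma proj_sum (D : {set 'I_m}) X : proj D X = \sum_(a in D) single a (row a X).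
Proof.
apply/matrixP => i c; rewrite summxE !mxE.
under eq_bigr do rewrite !mxE.
case: ifP => hi.
  rewrite (bigD1 i) //= eqxx big1 ?addr0; first by rewrite ?mxE.
  by move=> a /andP[_ ha]; rewrite eq_sym (negbTE ha).
rewrite big1 // => a ha; case: eqP => // ?; subst; by rewrite ha in hi.
Qed.

Lemma free_set (e : 'I_m) (D : {set 'I_m}) X : (forall a, a \in D -> free e a) -> P e (proj D X).
Proof.
move=> h; rewrite proj_sum; apply: (big_ind (P e)); [exact: P0|exact: PD|].
by move=> a ha; apply: h.
Qed.

Definition cutok (e : 'I_m) (B : {set 'I_m}) :=
  (forall a, a \in side s e -> a \notin B -> free e a) \/
  (forall a, a \in side s e -> a \in B -> free e a).

Lemma cut_P e (B : {set 'I_m}) (W : MX) : cutok e B -> P e W -> P e (proj B W).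
Proof.
case=> h PW.
  have H1 : P e (proj (side s e :\: B) W).
    by apply: free_set => a; rewrite inE => /andP[? ?]; apply: h.
  have H2 : P e (W - proj (side s e :\: B) W) by apply: PD => //; apply: PN.
  apply: Ploc H2; apply/matrixP => a c; rewrite !mxE in_setD.
  by case: (a \in side s e); case: (a \in B) => /=; rewrite ?subr0 ?subrr.
have H1 : P e (proj (side s e :&: B) W).
  by apply: free_set => a; rewrite inE => /andP[? ?]; apply: h.
apply: Ploc H1; apply/matrixP => a c; rewrite !mxE in_setI.
by case: (a \in side s e); case: (a \in B).
Qed.

Lemma Zs_proj (B : {set 'I_m}) (W : MX) : (forall e, cutok e B) -> Zs W -> Zs (proj B W).
Proof. by move=> h ZW e; apply: cut_P. Qed.

Lemma dead_of_cut j (B : {set 'I_m}) : (forall e, cutok e B) -> (forall a, a \in B -> a \notin side s j) ->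
  d j \in B -> dead (d j).
Proof.
move=> hc hB hdj W ZW.
have h0 : proj (side s j) (proj B W) = 0.
  apply: proj0 => a ha; rewrite proj_row; case: ifP => // /hB; by rewrite ha.
have := @Dec j (proj B W) (Zs_proj hc ZW) h0.
by rewrite proj_row hdj.
Qed.

Lemma dead_dec (p i : 'I_m) : dead p -> p \notin side s i -> d i = p.
Proof.
move=> dp hp; apply/eqP; rewrite eq_sym; apply/negPn/negP => hne.
have [W [ZW [_ hW]]] := Sec v0 hp hne.
by move: Hv0; rewrite -hW dp ?eqxx.
Qed.


Lemma m_gt1 : (1 < m)%N.
Proof. lia. Qed.

Lemma node_sh (j a : 'I_m) : a = sh j (off j a).
Proof. by rewrite sh_off. Qed.

Lemma sh_eqE (j : 'I_m) x y : (x < m)%N -> (y < m)%N -> (sh j x == sh j y) = (x == y).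
Proof.
move=> hx hy; apply/eqP/eqP => [|->] //; exact: sh_inj.
Qed.

Lemma side_sh1 (j a : 'I_m) : a \in side s (sh j 1) -> a \in side s j \/ a = sh j s.
Proof.
rewrite (node_sh j a) !in_side off_sh; have ht := off_lt j a.
rewrite off_shsh // ?m_gt1 // modn_small //.
case: ifP => h1 h2; last by lia.
case: (ltnP (off j a) s) => h3; [by left | right; congr (sh j _); lia].
Qed.

Lemma side_self (j a : 'I_m) : a \in side s j -> a \in side s (sh j 1) \/ a = j.
Proof.
rewrite (node_sh j a) !in_side off_sh; have ht := off_lt j a.
rewrite off_shsh // ?m_gt1 // modn_small // => h.
case: (posnP (off j a)) => h0; first by right; rewrite h0 sh0.
by left; lia.
Qed.

Lemma side_shm (j a : 'I_m) : a \in side s (sh j m') -> a \in side s j \/ a = sh j m'.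
Proof.
rewrite (node_sh j a) !in_side off_sh; have ht := off_lt j a.
rewrite off_shsh // modn_small //.
case: ifP => h1 h2.
  by right; congr (sh j _); lia.
by left; lia.
Qed.

Lemma rule1 (j : 'I_m) : d j = sh j s -> d (sh j 1) = j.
Proof.
move=> hj; case: (eqVneq (d (sh j 1)) j) => // hne; exfalso.
set r := d (sh j 1) in hne *.
have ht := off_lt j r.
have hrE := node_sh j r.
have h0 : off j r != 0%N by apply: contra hne => /eqP /off0 ->.
have h1 : (s + 1 <= off j r)%N.
  have := Hd (sh j 1); rewrite -/r {1}hrE in_side off_shsh ?m_gt1 //.
  case: ifP => ? ?; lia.
have hr1 : r \notin side s j by rewrite in_side; lia.
have hr2 : r != d j.
  by rewrite hj {1}hrE sh_eqE //; lia.
have [W [ZW [hW hWr]]] := Sec v0 hr1 hr2.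
have h2 := Dec ZW hW; rewrite hj in h2.
have h3 : proj (side s (sh j 1)) W = 0.
  apply: proj0 => a ha; case: (side_sh1 ha) => [ha'|->] //.
  exact: proj0_row hW ha'.
by move: Hv0; rewrite -hWr (Dec ZW h3) eqxx.
Qed.

Lemma rule2 (j : 'I_m) : d (sh j 1) = j -> d j = sh j s.
Proof.
move=> hj; case: (eqVneq (d j) (sh j s)) => // hne; exfalso.
set r := d j in hne *.
have ht := off_lt j r.
have hrE := node_sh j r.
have h1 : (s + 1 <= off j r)%N.
  have := Hd j; rewrite -/r in_side.
  move: hne; rewrite {1}hrE sh_eqE //; lia.
have hr1 : r \notin side s (sh j 1).
  by rewrite {1}hrE in_side off_shsh ?m_gt1 //; case: ifP => ?; lia.
have hr2 : r != d (sh j 1).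
  rewrite hj; apply/eqP => /(f_equal (off j)); rewrite off_self; lia.
have [W [ZW [hW hWr]]] := Sec v0 hr1 hr2.
have h2 := Dec ZW hW; rewrite hj in h2.
have h3 : proj (side s j) W = 0.
  apply: proj0 => a ha; case: (side_self ha) => [ha'|->] //.
  exact: proj0_row hW ha'.
by move: Hv0; rewrite -hWr (Dec ZW h3) eqxx.
Qed.


Lemma single_row (i a : 'I_m) v : row a (single i v) = if a == i then v else 0.
Proof. apply/rowP => c; rewrite !mxE; by case: eqP; rewrite ?mxE. Qed.

Lemma sh_s_notin (u : 'I_m) : sh u s \notin side s u.
Proof. by rewrite in_side off_sh modn_small // ltnn. Qed.

Lemma lf_of (u : 'I_m) : d u != sh u s -> free (sh u 1) (sh u s).
Proof.
move=> hu v.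
have hne : sh u s != d u by rewrite eq_sym.
have [W [ZW [hW hWr]]] := Sec v (sh_s_notin u) hne.
apply: (Ploc _ (ZW (sh u 1))); apply: proj_eq => a ha.
rewrite single_row; case: (side_sh1 ha) => [ha'|->]; last by rewrite eqxx.
rewrite (proj0_row hW ha'); case: eqP => // ha2.
by move: ha'; rewrite ha2 (negbTE (sh_s_notin u)).
Qed.

Lemma shm_notin (u : 'I_m) : sh u m' \notin side s u.
Proof. by rewrite in_side off_sh modn_small // -ltnS -leqNgt. Qed.

Lemma ff_of (u : 'I_m) : d u != sh u m' -> free (sh u m') (sh u m').
Proof.
move=> hu v.
have hne : sh u m' != d u by rewrite eq_sym.
have [W [ZW [hW hWr]]] := Sec v (shm_notin u) hne.
apply: (Ploc _ (ZW (sh u m'))); apply: proj_eq => a ha.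
rewrite single_row; case: (side_shm ha) => [ha'|->]; last by rewrite eqxx.
rewrite (proj0_row hW ha'); case: eqP => // ha2.
by move: ha'; rewrite ha2 (negbTE (shm_notin u)).
Qed.

Lemma sh1m (e : 'I_m) : sh (sh e 1) m' = e.
Proof. by rewrite shD add1n shm. Qed.
Lemma shm1 (e : 'I_m) : sh (sh e m') 1 = e.
Proof. by rewrite shD addn1 shm. Qed.

Lemma sh_addm (j : 'I_m) t : sh j (t + m) = sh j t.
Proof. by rewrite -sh_mod modnDr sh_mod. Qed.

Lemma ffR (e : 'I_m) : d e != sh e s -> free e e.
Proof.
move=> he; have := @ff_of (sh e 1); rewrite sh1m; apply.
apply: contra he => /eqP h; apply/eqP; exact: rule2.
Qed.

Lemma lfR (e : 'I_m) : d (sh e m') != sh (sh e m') s -> free e (sh e (s - 1)).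
Proof.
move=> he; have := lf_of he; rewrite shm1 shD.
have -> : (m' + s = (s - 1) + m)%N by lia.
by rewrite sh_addm.
Qed.

Lemma noconsec (e : 'I_m) : (s.+1 < m)%N -> d e = sh e s -> d (sh e 1) != sh (sh e 1) s.
Proof.
move=> hs he; rewrite (rule1 he) shD -{1}(sh0 e) sh_eqE //; lia.
Qed.

Lemma parity : odd m -> (s < m')%N ->
  (forall j, d j = sh j s \/ d j = sh j m') -> False.
Proof.
move=> hodd hs hall.
pose Rb j := d j == sh j s.
have step : forall j, Rb (sh j 1) = ~~ Rb j.
  move=> j; rewrite /Rb; case: (eqVneq (d j) (sh j s)) => hR /=.
    by rewrite (rule1 hR) shD -{1}(sh0 j) sh_eqE //; lia.
  case: (hall (sh j 1)) => [->|h]; first by rewrite eqxx.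
  by exfalso; move: hR; rewrite (rule2 _) ?eqxx // h sh1m.
have iter : forall t j, Rb (sh j t) = odd t (+) Rb j.
  elim=> [|t IH] j; first by rewrite sh0.
  have -> : sh j t.+1 = sh (sh j t) 1 by rewrite shD addn1.
  by rewrite step IH /=; case: (odd t); case: (Rb j).
have := iter m ord0; rewrite shm hodd /=.
by case: (Rb ord0).
Qed.

Lemma two_dead (p q : 'I_m) : dead p -> dead q -> p != q -> (2 * s < m)%N -> False.
Proof.
move=> dp dq hpq hs.
have hc := off_lt p q.
have hqE := node_sh p q.
have hc0 : off p q != 0%N by apply: contra hpq => /eqP /off0 ->.
move: hc hqE hc0; move: (off p q) => c hc hqE hc0.
pose b := (if c + 1 + s <= m then c + 1 else c - s)%N.
have hb1 : (1 <= b)%N by rewrite /b; case: ifP; lia.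
have hb2 : (b <= m - s)%N by rewrite /b; case: ifP; lia.
have hb3 : (b < m)%N by lia.
have hp : p \notin side s (sh p b).
  rewrite -{1}(sh0 p) in_side off_shsh //; case: ifP; lia.
have hq : q \notin side s (sh p b).
  rewrite {1}hqE in_side off_shsh // /b; case: (leqP (c + 1 + s) m) => h2; case: ifP => h1; lia.
have := dead_dec dp hp; rewrite (dead_dec dq hq) => /eqP.
by rewrite eq_sym (negbTE hpq).
Qed.

Lemma cut3 (e x y z : 'I_m) (B : {set 'I_m}) :
  (forall a, a \in side s e -> [\/ a = x, a = y | a = z]) ->
  ((x \in B) = (y \in B) \/ free e x) -> ((y \in B) = (z \in B) \/ free e z) ->
  cutok e B.
Proof.
move=> h H1 H2.
have fx : (x \in B) != (y \in B) -> free e x by case: H1 => // ->; rewrite eqxx.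
have fz : (y \in B) != (z \in B) -> free e z by case: H2 => // ->; rewrite eqxx.
case hy: (y \in B); [left|right] => a /h [->|->|->] hB.
- by apply: fx; rewrite hy (negbTE hB).
- by rewrite hy in hB.
- by apply: fz; rewrite hy (negbTE hB).
- by apply: fx; rewrite hy hB.
- by rewrite hy in hB.
- by apply: fz; rewrite hy hB.
Qed.


Lemma side_sm (e a : 'I_m) : a \in side s e -> exists2 t, (t < s)%N & a = sh e t.
Proof. by rewrite in_side => h; exists (off e a) => //; rewrite sh_off. Qed.

Lemma side3 (e a : 'I_m) : s = 3%N -> a \in side s e -> [\/ a = e, a = sh e 1 | a = sh e 2].
Proof.
move=> s3 /side_sm [t]; rewrite s3; case: t => [|[|[|t]]] //= _ ->.
- by constructor 1; rewrite sh0.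
- by constructor 2.
- by constructor 3.
Qed.

Lemma side2 (e a : 'I_m) : s = 2%N -> a \in side s e -> [\/ a = e, a = sh e 1 | a = sh e 1].
Proof.
move=> s3 /side_sm [t]; rewrite s3; case: t => [|[|t]] //= _ ->.
- by constructor 1; rewrite sh0.
- by constructor 2.
Qed.

Lemma side1 (e a : 'I_m) : s = 1%N -> a \in side s e -> [\/ a = e, a = e | a = e].
Proof.
move=> s3 /side_sm [t]; rewrite s3; case: t => [|t] //= _ ->.
by constructor 1; rewrite sh0.
Qed.

Lemma ffR' (e : 'I_m) : d (sh e 1) != e -> free e e.
Proof. by move=> he; have := @ff_of (sh e 1); rewrite sh1m; apply. Qed.

Lemma all_dead12 : s = 1%N \/ (s = 2%N /\ (5 <= m)%N) -> forall j, dead (d j).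
Proof.
move=> hs j; apply: (@dead_of_cut j [set d j]).
- move=> e; case: hs => [s1|[s2 m5]].
    by apply: (cut3 (x:=e) (y:=e) (z:=e)); [move=> a; exact: side1| left | left].
  case: (eqVneq (d (sh e 1)) e) => h1.
    have h2 := rule2 h1.
    have fr : free e (sh e 1).
      have -> : sh e 1 = sh e (s - 1) by rewrite s2.
      apply: lfR; apply/negP => /eqP h3.
      move: (rule1 h3); rewrite shm1 h2 => /eqP; rewrite sh_eqE //; lia.
    apply: (cut3 (x:=sh e 1) (y:=e) (z:=e)); [|by right|by left].
    by move=> a /(side2 s2) [->|->|->]; [constructor 2|constructor 1|constructor 1].
  apply: (cut3 (x:=e) (y:=sh e 1) (z:=sh e 1)); [|by right; apply: ffR'|by left].
  by move=> a; exact: side2.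
- by move=> a; rewrite inE => /eqP ->.
- by rewrite inE.
Qed.

Lemma finish_dead : (2 * s < m)%N -> (forall j, dead (d j)) -> False.
Proof.
move=> hs hall.
set p := d ord0.
have hp : p \in side s p by rewrite in_side off_self.
have hq := Hd p.
apply: (@two_dead p (d p)); [exact: hall | exact: hall | | exact: hs].
by apply/eqP => h; move: hq; rewrite -h hp.
Qed.

Lemma modn_lt2 t : (t < m + m)%N -> (t %% m = if t < m then t else t - m)%N.
Proof.
move=> h; case: ifP => h1; first by rewrite modn_small.
have {1}-> : t = ((t - m) + m)%N by lia.
by rewrite modnDr modn_small //; lia.
Qed.

Lemma cut_arc (j : 'I_m) b1 b2 : s = 3%N -> (3 <= b1)%N -> (b1 <= b2)%N -> (b2 < m)%N ->
  d (sh j (b1-1)) != sh (sh j (b1-1)) s -> d (sh j b2) != sh (sh j b2) s ->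
  d (sh j (b1-3)) != sh (sh j (b1-3)) s -> d (sh j (b2-2)) != sh (sh j (b2-2)) s ->
  forall e, cutok e [set a | (b1 <= off j a <= b2)%N].
Proof.
move=> s3 h1 h12 h2 H1 H2 H3 H4 e.
have ho := off_lt j e. have eE := node_sh j e.
move: ho eE; move: (off j e) => o ho eE.
apply: (cut3 (x:=e) (y:=sh e 1) (z:=sh e 2)); first by move=> a; exact: side3.
- case: (boolP ((o == b1 - 1) || (o == b2))%N) => ho'.
    by right; apply: ffR; rewrite eE; case/orP: ho' => /eqP ->.
  left; move/norP: ho' => [/eqP ? /eqP ?].
  rewrite !inE eE shD !off_sh !modn_lt2; try lia.
  by case: ifP => ?; case: ifP => ?; lia.
- case: (boolP ((o == b1 - 2) || (o == b2 - 1))%N) => ho'.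
    right; have -> : sh e 2 = sh e (s - 1) by rewrite s3.
    apply: lfR; rewrite eE shD.
    have -> : (o + m' = (o - 1) + m)%N by case/orP: ho' => /eqP ->; lia.
    rewrite sh_addm; case/orP: ho' => /eqP ->.
      by have -> : (b1 - 2 - 1 = b1 - 3)%N by lia.
    by have -> : (b2 - 1 - 1 = b2 - 2)%N by lia.
  left; move/norP: ho' => [/eqP ? /eqP ?].
  rewrite !inE eE !shD !off_sh !modn_lt2; try lia.
  by case: ifP => ?; case: ifP => ?; lia.
Qed.


Lemma interior_dead (j : 'I_m) : s = 3%N -> (7 <= m)%N ->
  d j != sh j s -> d j != sh j m' -> dead (d j).
Proof.
move=> s3 m7 hj1 hj2.
have nc : forall e, d e = sh e s -> d (sh e 1) != sh (sh e 1) s.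
  by move=> e; apply: noconsec; lia.
have nRm : d (sh j m') != sh (sh j m') s.
  apply: contra hj2 => /eqP h; have := rule1 h; rewrite shm1 => ->; by [].
have [b1 hb1 [Ha Hb]] : exists2 b1, (3 <= b1 <= 4)%N &
    (d (sh j (b1-1)) != sh (sh j (b1-1)) s /\ d (sh j (b1-3)) != sh (sh j (b1-3)) s).
  case: (eqVneq (d (sh j 2)) (sh (sh j 2) s)) => h.
    exists 4%N => //; split; first by have := nc _ h; rewrite shD.
    apply/negP => /eqP h'; have := nc _ h'; by rewrite shD h eqxx.
  by exists 3%N => //; split; rewrite ?sh0.
have [b2 hb2 [Hc Hd']] : exists2 b2, (m - 2 <= b2 <= m - 1)%N &
    (d (sh j b2) != sh (sh j b2) s /\ d (sh j (b2-2)) != sh (sh j (b2-2)) s).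
  case: (eqVneq (d (sh j (m - 3))) (sh (sh j (m - 3)) s)) => h.
    exists (m - 2)%N; first lia.
    split; first by have := nc _ h; rewrite shD (_ : (m - 3 + 1 = m - 2)%N) //; lia.
    apply/negP => /eqP h'; have := nc _ h'.
    by rewrite shD (_ : (m - 2 - 2 + 1 = m - 3)%N) ?h ?eqxx //; lia.
  exists (m - 1)%N; first lia.
  rewrite (_ : (m - 1 = m')%N); last lia.
  by split; rewrite // (_ : (m' - 2 = m - 3)%N) //; lia.
apply: (@dead_of_cut j [set a | (b1 <= off j a <= b2)%N]).
- by apply: cut_arc => //; lia.
- by move=> a; rewrite in_side inE -leqNgt s3 => /andP[h _]; lia.
- have h1 := Hd j; rewrite in_side -leqNgt in h1.
  have h2 : off j (d j) != 3%N.
    by apply: contra hj1 => /eqP h; rewrite {1}(node_sh j (d j)) h s3.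
  have h3 : off j (d j) != m'.
    by apply: contra hj2 => /eqP h; rewrite {1}(node_sh j (d j)) h.
  have h4 := off_lt j (d j).
  by rewrite inE; move: h2 h3 => /eqP ? /eqP ?; lia.
Qed.

Lemma case_s3 : s = 3%N -> (7 <= m)%N -> odd m -> False.
Proof.
move=> s3 m7 hodd.
have [j hj1 hj2] : exists2 j, d j != sh j s & d j != sh j m'.
  case: (boolP [exists j, (d j != sh j s) && (d j != sh j m')]).
    by case/existsP => j /andP [h1 h2]; exists j.
  move/existsPn => hall; exfalso; apply: parity => // [|j]; first lia.
  by move: (hall j); rewrite negb_and !negbK => /orP [/eqP|/eqP]; [left|right].
set p := d j.
have dp : dead p by apply: interior_dead.
have h1 : d (sh p 1) = p.
  apply: dead_dec dp _; rewrite -{1}(sh0 p) in_side off_shsh; try lia; first [case: ifP => ?; lia | simpl; lia].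
have hp : d p = sh p s := rule2 h1.
have h3 : d (sh p (m - 3)) = p.
  apply: dead_dec dp _; rewrite -{1}(sh0 p) in_side off_shsh; try lia; first [case: ifP => ?; lia | simpl; lia].
have h4 : d (sh p (m - 2)) = sh p (m - 3).
  have e1 : sh (sh p (m - 3)) 1 = sh p (m - 2).
    by rewrite shD (_ : (m - 3 + 1 = m - 2)%N) //; lia.
  rewrite -e1; apply: rule1; rewrite h3 shD (_ : (m - 3 + s = m)%N) ?shm //; lia.
set u := sh p m'.
have hu1 : d u != sh u s.
  apply/negP => /eqP h; have := rule1 h; rewrite /u shm1 hp => /eqP.
  rewrite sh_eqE //; lia.
have hu2 : d u != sh u m'.
  apply/negP => /eqP h.
  have e1 : sh u m' = sh p (m - 2).
    by rewrite /u shD (_ : (m' + m' = (m - 2) + m)%N) ?sh_addm //; lia.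
  have e2 : sh (sh p (m - 2)) 1 = u.
    by rewrite /u shD (_ : (m - 2 + 1 = m')%N) //; lia.
  rewrite e1 -e2 in h; have := rule2 h; rewrite h4 shD.
  have -> : (m - 2 + s = 1 + m)%N by lia.
  rewrite sh_addm => /eqP; rewrite sh_eqE //; lia.
have dq : dead (d u) by apply: interior_dead.
apply: (two_dead dp dq); last lia.
apply/eqP => h; have := Hd u; rewrite -h /u -{1}(sh0 p) in_side off_shsh; try lia; first [case: ifP => ?; lia | simpl; lia].
Qed.

Lemma case_sm2 : s.+2 = m -> odd m -> False.
Proof.
move=> hsm hodd; apply: parity => // [|j]; first lia.
have h1 := Hd j; rewrite in_side -leqNgt in h1.
have h2 := off_lt j (d j).
rewrite {1 2}(node_sh j (d j)).
have : (off j (d j) = s \/ off j (d j) = m')%N by lia.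
by case=> ->; [left|right].
Qed.

Lemma core_main : [\/ s = 1%N /\ (3 <= m)%N, s = 2%N /\ (5 <= m)%N,
      s = 3%N /\ odd m | s = (m - 2)%N /\ odd m] -> False.
Proof.
case=> [[s1 m3]|[s2 m5]|[s3 hodd]|[sm hodd]].
- by apply: finish_dead; [lia | apply: all_dead12; left].
- by apply: finish_dead; [lia | apply: all_dead12; right].
- have : (m = 5 \/ m = 6 \/ 7 <= m \/ m = 4)%N by lia.
  case=> [h|[h|[h|h]]].
  + by apply: case_sm2 => //; lia.
  + by rewrite h in hodd.
  + exact: case_s3.
  + by rewrite h in hodd.
- by apply: case_sm2 => //; lia.
Qed.

End Core.

Section Helpers.
Local Open Scope ring_scope.

Lemma proj_zero (F : fieldType) m k (A : {set 'I_m}) : proj A (0 : 'M[F]_(m, k)) = 0.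
Proof. by apply/matrixP => i j; rewrite !mxE; case: ifP. Qed.

Lemma projD (F : fieldType) m k (A : {set 'I_m}) (W W' : 'M[F]_(m, k)) :
  proj A (W + W') = proj A W + proj A W'.
Proof. by apply/matrixP => i j; rewrite !mxE; case: ifP; rewrite ?addr0. Qed.

Lemma projN (F : fieldType) m k (A : {set 'I_m}) (W : 'M[F]_(m, k)) :
  proj A (- W) = - proj A W.
Proof. by apply/matrixP => i j; rewrite !mxE; case: ifP; rewrite ?oppr0. Qed.


End Helpers.

Theorem theorem1 (F : finFieldType) (m s k : nat) :
  (2 <= m)%N -> (1 <= s <= m - 1)%N -> (0 < k)%N ->
  [\/ s = 1%N /\ (3 <= m)%N,
      s = 2%N /\ (5 <= m)%N,
      s = 3%N /\ odd m
    | s = (m - 2)%N /\ odd m] ->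
  ~ feasible_linear F m s k.
Proof.
move=> hm hs hk hcase [n [E [d [DEC H]]]].
move: H => [Hd [HDEC Hsec]].
move: n E d DEC Hd HDEC Hsec hcase hs.
case: m hm => [//|m'] hm n E d DEC Hd HDEC Hsec hcase hs.
pose x := codeword E (side s).
pose P := fun e (W : 'M[F]_(m'.+1, k)) => x W e = 0%R.
have x0 : forall e, x 0%R e = 0%R.
  by move=> e; rewrite /x /codeword proj_zero linear0 mul0mx.
pose v0 : 'rV[F]_k := const_mx 1%R.
have Hv0 : v0 != 0%R.
  apply/eqP => /rowP /(_ (Ordinal hk)); rewrite !mxE => /eqP; by rewrite oner_eq0.
apply: (@core_main F m' k s P _ _ _ _ d Hd _ _ v0 Hv0 _ _ hcase).
- by move=> e; exact: x0.
- move=> e W W'; rewrite /P /x /codeword => h1 h2.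
  by rewrite projD linearD mulmxDl h1 h2 addr0.
- move=> e W; rewrite /P /x /codeword => h1.
  by rewrite projN linearN mulNmx h1 oppr0.
- by move=> e W W'; rewrite /P /x /codeword => ->.
- move=> j W ZW hW.
  have hx : x W = x 0%R.
    apply: functional_extensionality_dep => e; rewrite x0; exact: ZW.
  have := HDEC j W; rewrite -/x hW hx.
  have := HDEC j 0%R; rewrite -/x proj_zero => -> <-.
  by rewrite row0.
- move=> j i v hi hid.
  have := Hsec j i hi hid 0%R v (x 0%R).
  set S1 := [set _ | _]; set S2 := [set _ | _] => hcard.
  have : (0 < #|S2|)%N.
    apply/card_gt0P; exists 0%R; rewrite inE eqxx /=.
    by apply/forallP => e.
  rewrite -hcard muln_gt0 => /andP [/card_gt0P [W HW] _].
  move: HW; rewrite inE => /andP [/andP [/eqP h1 /eqP h2] /forallP h3].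
  exists W; split; last split => //.
  + move=> e; have := h3 e; rewrite /P /x => /eqP ->; exact: x0.
  + by rewrite h1 proj_zero.
- lia.
- lia.
Qed.
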